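(* Let $S$ be a quasi-adequate semigroup with an adequate transversal $S^0$. Then $S$ is orthodox if and only if $S^0$ is an inverse semigroup.
   Context: For a semigroup $S$, $S^1$ is $S$ with an identity adjoined, $\mathcal{L},\mathcal{R}$ Green's relations. $\mathcal{R}^\ast=\{(a,b):\forall x,y\in S^1,\ xa=ya\iff xb=yb\}$, $\mathcal{L}^\ast=\{(a,b):\forall x,y\in S^1,\ ax=ay\iff bx=by\}$. $S$ is abundant if each $\mathcal{R}^\ast$- and $\mathcal{L}^\ast$-class contains an idempotent; adequate if also idempotents commute (then $a^+$, $a^\ast$ are the unique idempotents $\mathcal{R}^\ast$-, resp. $\mathcal{L}^\ast$-related to $a$). Quasi-adequate: abundant with idempotents forming a subsemigroup; orthodox: regular with idempotents forming a subsemigroup. An abundant subsemigroup $U$ of abundant $S$ is a $\ast$-subsemigroup if $\mathcal{L}^\ast(U)=\mathcal{L}^\ast(S)\cap(U\times U)$, $\mathcal{R}^\ast(U)=\mathcal{R}^\ast(S)\cap(U\times U)$. An adequate $\ast$-subsemigroup $S^0$ of abundant $S$ is an adequate transversal if each $x\in S$ has a unique $\overline{x}\in S^0$ and idempotents $e,f$ of $S$ with $x=e\overline{x}f$, $e\,\mathcal{L}\,\overline{x}^+$, $f\,\mathcal{R}\,\overline{x}^\ast$. *)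

(* Defs.v *)
Section SemigroupDefs.
Context {S : Type} (mul : S -> S -> S).

(* S^1 = S with an adjoined identity, modelled as option S (None = identity). *)
Definition lmul (x : option S) (a : S) : S :=
  match x with None => a | Some x => mul x a end.
Definition rmul (a : S) (x : option S) : S :=
  match x with None => a | Some x => mul a x end.
Definition in1 (U : S -> Prop) (x : option S) : Prop :=
  match x with None => True | Some x => U x end.

Definition fullS : S -> Prop := fun _ => True.

Definition idempotent (e : S) : Prop := mul e e = e.

Definition GreenL (a b : S) : Prop :=
  exists x y : option S, a = lmul x b /\ b = lmul y a.
Definition GreenR (a b : S) : Prop :=
  exists x y : option S, a = rmul b x /\ b = rmul a y.

Definition Rstar_in (U : S -> Prop) (a b : S) : Prop :=
  forall x y : option S, in1 U x -> in1 U y ->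
    (lmul x a = lmul y a <-> lmul x b = lmul y b).
Definition Lstar_in (U : S -> Prop) (a b : S) : Prop :=
  forall x y : option S, in1 U x -> in1 U y ->
    (rmul a x = rmul a y <-> rmul b x = rmul b y).

Definition subsemigroup (U : S -> Prop) : Prop :=
  forall a b, U a -> U b -> U (mul a b).

Definition abundant_in (U : S -> Prop) : Prop :=
  forall a, U a ->
    (exists e, U e /\ idempotent e /\ Rstar_in U a e) /\
    (exists f, U f /\ idempotent f /\ Lstar_in U a f).

Definition idempotents_commute_in (U : S -> Prop) : Prop :=
  forall e f, U e -> U f -> idempotent e -> idempotent f -> mul e f = mul f e.

Definition idempotents_closed_in (U : S -> Prop) : Prop :=
  forall e f, U e -> U f -> idempotent e -> idempotent f -> idempotent (mul e f).

Definition adequate_in (U : S -> Prop) : Prop :=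
  abundant_in U /\ idempotents_commute_in U.

Definition regular_in (U : S -> Prop) : Prop :=
  forall a, U a -> exists x, U x /\ mul (mul a x) a = a.

Definition inverse_in (U : S -> Prop) : Prop :=
  forall a, U a -> exists b, (U b /\ mul (mul a b) a = a /\ mul (mul b a) b = b) /\
    forall b', U b' -> mul (mul a b') a = a -> mul (mul b' a) b' = b' -> b' = b.

Definition quasi_adequate : Prop :=
  abundant_in fullS /\ idempotents_closed_in fullS.

Definition orthodox : Prop :=
  regular_in fullS /\ idempotents_closed_in fullS.

Definition star_subsemigroup (U : S -> Prop) : Prop :=
  subsemigroup U /\ abundant_in U /\
  forall a b, U a -> U b ->
    (Lstar_in U a b <-> Lstar_in fullS a b) /\
    (Rstar_in U a b <-> Rstar_in fullS a b).

(* x = e xb f with e idempotent, e L xb^+, f idempotent, f R xb^*, where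
   xb^+ (resp. xb^* ) is the (unique, as S0 is adequate) idempotent of S0
   that is R*- (resp. L*-) related to xb in S0. *)
Definition transversal_decomp (S0 : S -> Prop) (x xb : S) : Prop :=
  exists e f, idempotent e /\ idempotent f /\ x = mul (mul e xb) f /\
    (exists g, S0 g /\ idempotent g /\ Rstar_in S0 xb g /\ GreenL e g) /\
    (exists h, S0 h /\ idempotent h /\ Lstar_in S0 xb h /\ GreenR f h).

Definition adequate_transversal (S0 : S -> Prop) : Prop :=
  star_subsemigroup S0 /\ adequate_in S0 /\
  forall x, exists xb, S0 xb /\ transversal_decomp S0 x xb /\
    forall xb', S0 xb' -> transversal_decomp S0 x xb' -> xb' = xb.

End SemigroupDefs.

(* Main.v *)
Require Import Defs.
From Stdlib Require Import Setoid.

Section Aux.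
Context {S : Type} (mul : S -> S -> S)
  (assoc : forall a b c : S, mul a (mul b c) = mul (mul a b) c).

Lemma GL_facts e g : idempotent mul e -> idempotent mul g -> GreenL mul e g ->
  mul e g = e /\ mul g e = g.
Proof.
  unfold idempotent; intros He Hg [x [y [E1 E2]]].
  split.
  - destruct x as [s|]; simpl in E1.
    + rewrite E1 at 1. rewrite <- assoc, Hg. now rewrite <- E1.
    + rewrite E1. exact Hg.
  - destruct y as [s|]; simpl in E2.
    + rewrite E2 at 1. rewrite <- assoc, He. now rewrite <- E2.
    + rewrite E2. exact He.
Qed.

Lemma GR_facts f h : idempotent mul f -> idempotent mul h -> GreenR mul f h ->
  mul h f = f /\ mul f h = h.
Proof.
  unfold idempotent; intros Hf Hh [x [y [E1 E2]]].
  split.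
  - destruct x as [s|]; simpl in E1.
    + rewrite E1 at 1. rewrite assoc, Hh. now rewrite <- E1.
    + rewrite E1. exact Hh.
  - destruct y as [s|]; simpl in E2.
    + rewrite E2 at 1. rewrite assoc, Hf. now rewrite <- E2.
    + rewrite E2. exact Hf.
Qed.

Lemma key_eq f g k : mul f k = mul k f ->
  mul f g = g -> mul g f = f -> mul g k = g -> mul k g = k -> g = k.
Proof.
  intros Hc H1 H2 H3 H4.
  assert (Hfk : mul f k = f).
  { rewrite <- H2 at 1. rewrite <- assoc, Hc, assoc, H3. exact H2. }
  assert (Hkf : mul k f = f) by (rewrite <- Hc; exact Hfk).
  transitivity (mul f g); [symmetry; exact H1|]. rewrite <- Hkf, <- assoc, H1. exact H4.
Qed.
End Aux.

Theorem proposition4p1 (S : Type) (mul : S -> S -> S)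
  (assoc : forall a b c : S, mul a (mul b c) = mul (mul a b) c)
  (S0 : S -> Prop)
  (hqa : quasi_adequate mul)
  (hS0 : adequate_transversal mul S0) :
  orthodox mul <-> inverse_in mul S0.
Proof.
  destruct hqa as [habS hclS].
  destruct hS0 as [[hsub [habS0 hstar]] [[_ hcomm] htr]].
  split.
  - intros [hreg _] a Ha.
    destruct (habS0 a Ha) as [[e [He [Hee HRe]]] [f [Hf [Hff HLf]]]].
    destruct (hreg a I) as [a' [_ Ha']].
    assert (HRe' : Rstar_in mul fullS a e) by exact (proj1 (proj2 (hstar a e Ha He)) HRe).
    assert (HLf' : Lstar_in mul fullS a f) by exact (proj1 (proj1 (hstar a f Ha Hf)) HLf).
    assert (ea : mul e a = a) by exact (proj2 (HRe (Some e) None He I) Hee).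
    assert (aa'e : mul (mul a a') e = e) by exact (proj1 (HRe' (Some (mul a a')) None I I) Ha').
    assert (af : mul a f = a) by exact (proj2 (HLf (Some f) None Hf I) Hff).
    assert (fa'a : mul f (mul a' a) = f).
    { apply (proj1 (HLf' (Some (mul a' a)) None I I)). simpl. rewrite assoc. exact Ha'. }
    set (b := mul (mul f a') e).
    assert (ab : mul a b = e).
    { unfold b. rewrite !assoc, af. exact aa'e. }
    assert (ba : mul b a = f).
    { unfold b. rewrite <- assoc, ea, <- assoc. exact fa'a. }
    assert (aba : mul (mul a b) a = a) by (rewrite ab; exact ea).
    assert (bab : mul (mul b a) b = b).
    { rewrite ba. unfold b. rewrite !assoc, Hff. reflexivity. }
    assert (Sb : S0 b).
    { destruct (htr b) as [bb [Hbb [[g [h [Hg [Hh [Hdec [[k [Hk [Hkk [HRk HLgk]]]]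
        [l [Hl [Hll [HLl HRhl]]]]]]]]]] _]]].
      assert (HRk' : Rstar_in mul fullS bb k) by exact (proj1 (proj2 (hstar bb k Hbb Hk)) HRk).
      assert (HLl' : Lstar_in mul fullS bb l) by exact (proj1 (proj1 (hstar bb l Hbb Hl)) HLl).
      destruct (GL_facts mul assoc g k Hg Hkk HLgk) as [gk kg].
      destruct (GR_facts mul assoc h l Hh Hll HRhl) as [lh hl].
      assert (kbb : mul k bb = bb) by exact (proj2 (HRk (Some k) None Hk I) Hkk).
      assert (bbl : mul bb l = bb) by exact (proj2 (HLl (Some l) None Hl I) Hll).
      assert (fb : mul f b = b) by (rewrite <- ba; exact bab).
      assert (be : mul b e = b) by (rewrite <- ab, assoc; exact bab).
      assert (bl : mul b l = mul g bb) by (rewrite Hdec, <- assoc, hl, <- assoc, bbl; reflexivity).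
      assert (kb : mul k b = mul bb h) by (rewrite Hdec, !assoc, kg, kbb; reflexivity).
      assert (fg : mul f g = g).
      { assert (E : mul (mul f g) bb = mul g bb).
        { rewrite <- assoc, <- bl, assoc, fb. reflexivity. }
        pose proof (proj1 (HRk' (Some (mul f g)) (Some g) I I) E) as E2. simpl in E2.
        rewrite <- assoc, gk in E2. exact E2. }
      assert (gf : mul g f = f).
      { rewrite <- ba, assoc. unfold idempotent in Hg.
        replace (mul g b) with b; [reflexivity|].
        rewrite Hdec, !assoc, Hg. reflexivity. }
      assert (he : mul h e = h).
      { assert (E : mul bb (mul h e) = mul bb h).
        { rewrite assoc, <- kb, <- assoc, be. reflexivity. }
        pose proof (proj1 (HLl' (Some (mul h e)) (Some h) I I) E) as E2. simpl in E2.
        rewrite assoc, lh in E2. exact E2. }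
      assert (eh : mul e h = e).
      { rewrite <- ab, <- assoc. f_equal. unfold idempotent in Hh.
        rewrite Hdec, <- assoc, Hh. reflexivity. }
      assert (gk' : g = k) by (apply (key_eq mul assoc f g k); auto).
      assert (hl' : h = l).
      { apply (key_eq (fun x y => mul y x)) with (f := e); auto. }
      assert (bbb : b = bb).
      { rewrite Hdec, gk', hl', kbb. exact bbl. }
      rewrite bbb. exact Hbb. }
    exists b. split; [split; [exact Sb| split; assumption]|].
    intros b' Hb' H1 H2.
    assert (iab : idempotent mul (mul a b)) by (unfold idempotent; rewrite assoc, aba; reflexivity).
    assert (iba : idempotent mul (mul b a)) by (unfold idempotent; rewrite assoc, bab; reflexivity).
    assert (iab' : idempotent mul (mul a b')) by (unfold idempotent; rewrite assoc, H1; reflexivity).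
    assert (iba' : idempotent mul (mul b' a)) by (unfold idempotent; rewrite assoc, H2; reflexivity).
    assert (c1 := hcomm _ _ (hsub _ _ Hb' Ha) (hsub _ _ Sb Ha) iba' iba).
    assert (c2 := hcomm _ _ (hsub _ _ Ha Hb') (hsub _ _ Ha Sb) iab' iab).
    assert (E1 : b = mul (mul b' a) b).
    { transitivity (mul (mul (mul b a) (mul b' a)) b).
      - replace (mul (mul b a) (mul b' a)) with (mul b a); [symmetry; exact bab|].
        rewrite <- (assoc b a), (assoc a b' a), H1. reflexivity.
      - rewrite <- c1, <- assoc, bab. reflexivity. }
    assert (E2 : b' = mul (mul b' a) b).
    { transitivity (mul b' (mul (mul a b) (mul a b'))).
      - replace (mul (mul a b) (mul a b')) with (mul a b'); [symmetry; rewrite assoc; exact H2|].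
        rewrite assoc, aba. reflexivity.
      - rewrite <- c2, assoc, (assoc b' a b'), H2, assoc. reflexivity. }
    rewrite E2, <- E1. reflexivity.
  - intros Hinv. split; [|exact hclS]. intros x _.
    destruct (htr x) as [xb [Hxb [[e [f [He [Hf [Hdec [[k [Hk [Hkk [HRk HLek]]]]
        [l [Hl [Hll [HLl HRfl]]]]]]]]]] _]]].
    destruct (Hinv xb Hxb) as [y [[Hy [H1 H2]] _]].
    exists y. split; [exact I|].
    destruct (GL_facts mul assoc e k He Hkk HLek) as [ek ke].
    destruct (GR_facts mul assoc f l Hf Hll HRfl) as [lf fl].
    assert (kxb : mul k xb = xb) by exact (proj2 (HRk (Some k) None Hk I) Hkk).
    assert (xbl : mul xb l = xb) by exact (proj2 (HLl (Some l) None Hl I) Hll).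
    assert (Sxy : S0 (mul xb y)) by (apply hsub; assumption).
    assert (Syx : S0 (mul y xb)) by (apply hsub; assumption).
    assert (ixy : idempotent mul (mul xb y)) by (unfold idempotent; rewrite assoc, H1; reflexivity).
    assert (iyx : idempotent mul (mul y xb)) by (unfold idempotent; rewrite assoc, H2; reflexivity).
    assert (kk : k = mul xb y).
    { assert (A1 : mul (mul xb y) k = k) by exact (proj1 (HRk (Some (mul xb y)) None Sxy I) H1).
      assert (A2 : mul k (mul xb y) = mul xb y) by (rewrite assoc, kxb; reflexivity).
      rewrite <- A1, (hcomm _ _ Sxy Hk ixy Hkk). exact A2. }
    assert (ll : l = mul y xb).
    { assert (A1 : mul l (mul y xb) = l).
      { apply (proj1 (HLl (Some (mul y xb)) None Syx I)). simpl. rewrite assoc. exact H1. }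
      assert (A2 : mul (mul y xb) l = mul y xb) by (rewrite <- assoc, xbl; reflexivity).
      rewrite <- A1, (hcomm _ _ Hl Syx Hll iyx). exact A2. }
    assert (fy : mul f y = y).
    { rewrite <- H2 at 1. rewrite assoc, <- ll, fl, ll. exact H2. }
    assert (ye : mul y e = y).
    { rewrite <- H2 at 1. rewrite <- (assoc y xb y), <- kk, <- assoc, ke, kk, assoc. exact H2. }
    rewrite Hdec.
    rewrite <- (assoc (mul e xb) f y), fy.
    rewrite (assoc (mul (mul e xb) y) (mul e xb) f).
    rewrite (assoc (mul (mul e xb) y) e xb).
    rewrite <- (assoc (mul e xb) y e), ye.
    rewrite <- (assoc (mul e xb) y xb), <- (assoc e xb (mul y xb)), (assoc xb y xb), H1.
    reflexivity.
Qed.
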